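(* For each integer $n\ge 1$ let $\mathbb{P}_n^{*}$ be a probability distribution on $[n]=\{1,\ldots,n\}$, written as $\mathbb{P}_n^{*}(i)=\frac{1}{n}+\varepsilon_{i,n}$ for $i\in[n]$ (so $\varepsilon_{i,n}\in[-\tfrac1n,1-\tfrac1n]$ and $\sum_{i=1}^n\varepsilon_{i,n}=0$). Write $\alpha_n=n^{1/\log\log n}$. Assume there is a constant $C$ such that for all $n$ (with $\log\log n>0$) and all primes $p>\alpha_n$, $$\sum_{l=1}^{\lfloor n/p\rfloor}\varepsilon_{lp,n}\le \frac{C}{p}.$$ Then, as $n\to\infty$, $$\frac{1}{(\log\log n)^{1/2}}\sum_{\alpha_n<p\le n}\left(\frac1p+\sum_{l=1}^{\lfloor n/p\rfloor}\varepsilon_{lp,n}\right)\to 0,$$ where the outer sum is over primes $p$ with $\alpha_n<p\le n$.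
   Context: $\lfloor\cdot\rfloor$ is the floor function; $\log$ is the natural logarithm. *)

(* Defs.v *)
From HB Require Import structures.
From mathcomp Require Import all_boot all_order all_algebra.
From mathcomp Require Import all_classical all_reals all_analysis.
Set Implicit Arguments. Unset Strict Implicit. Unset Printing Implicit Defensive.
Import Order.TTheory GRing.Theory Num.Theory.
Local Open Scope ring_scope.

Definition alpha (R : realType) (n : nat) : R :=
  powR (n%:R) ((ln (ln (n%:R : R)))^-1).

(* eps i n = epsilon_{i,n}; P_n^*(i) = 1/n + eps i n is a probability
   distribution on {1,...,n}. *)
Definition is_prob_perturbation (R : realType) (eps : nat -> nat -> R) : Prop :=
  forall n : nat, (1 <= n)%N ->
    (forall i : nat, (1 <= i <= n)%N -> 0 <= (n%:R)^-1 + eps i n) /\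
    \sum_(1 <= i < n.+1) eps i n = 0.

Definition mult_sum (R : realType) (eps : nat -> nat -> R) (n p : nat) : R :=
  \sum_(1 <= l < (n %/ p).+1) eps (l * p)%N n.

Definition lemma3_seq (R : realType) (eps : nat -> nat -> R) (n : nat) : R :=
  (Num.sqrt (ln (ln (n%:R : R))))^-1 *
  \sum_(0 <= p < n.+1 | prime p && (alpha R n < p%:R))
     ((p%:R)^-1 + mult_sum eps n p).

(* Main.v *)
Require Import Defs.
From HB Require Import structures.
From mathcomp Require Import all_boot all_order all_algebra.
From mathcomp Require Import all_classical all_reals all_analysis.
From mathcomp Require Import ring lra.
Import Order.TTheory GRing.Theory Num.Theory.

Lemma prime_dvd_fact p m : prime p -> (p %| m`!)%N -> (p <= m)%N.
Proof.
move=> pp; elim: m => [|m IH]; first by rewrite dvdn1 => /eqP e; rewrite e in pp.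
rewrite factS Euclid_dvdM // => /orP [/dvdn_leq -> //| /IH h].
exact: leq_trans h (leqnSn m).
Qed.

Definition PP m k := (\prod_(m.+1 <= p < k) (if prime p then p else 1))%N.

Lemma PP_prop m k : (k <= (2 * m).+1)%N ->
  (PP m k %| 'C(2 * m, m))%N /\ forall q, prime q -> (k <= q)%N -> coprime q (PP m k).
Proof.
rewrite /PP; elim: k => [|k IH] hk.
  by rewrite big_geq // dvd1n; split => // q _ _; rewrite coprimen1.
have [hkm|hkm] := leqP k m.
  by rewrite big_geq // dvd1n; split => // q _ _; rewrite coprimen1.
rewrite big_nat_recr //=.
have [IH1 IH2] := IH (ltnW hk).
split; last first.
  move=> q pq hq; rewrite coprimeMr IH2 ?(ltnW hq) //=.
  case: ifP => pk; last exact: coprimen1.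
  rewrite prime_coprime //; apply/negP => /dvdn_leq.
  have k0 : (0 < k)%N by apply: leq_ltn_trans hkm.
  by move/(_ k0); rewrite leqNgt hq.
case: ifP => pk; last by rewrite muln1.
rewrite Gauss_dvd ?IH1 /=; last by rewrite coprime_sym; apply: IH2.
have hb := bin_fact (leq_addl m m : (m <= m + m)%N).
have : (k %| (2 * m)`!)%N by apply: dvdn_fact; rewrite prime_gt0 //= -ltnS.
rewrite mul2n -addnn -hb addnK Gauss_dvdl //.
rewrite prime_coprime // Euclid_dvdM // negb_or.
by apply/andP; split; apply/negP => /(prime_dvd_fact k m pk); rewrite leqNgt hkm.
Qed.

Definition cnt m k := (\sum_(m.+1 <= p < k) (if prime p then 1 else 0))%N.

Lemma PP_ge m k : (m ^ cnt m k <= PP m k)%N.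
Proof.
rewrite /PP /cnt; elim: k => [|k IH]; first by rewrite !big_geq.
have [hkm|hkm] := leqP k m; first by rewrite !big_geq.
rewrite !big_nat_recr //= expnD; case: ifP => pk; last by rewrite !muln1.
by rewrite expn1 leq_mul // ltnW.
Qed.

Lemma binom_le m : ('C(2 * m, m) <= 4 ^ m)%N.
Proof.
have := Pascal 1 1 (2 * m).
rewrite (_ : 4 ^ m = 2 ^ (2 * m))%N; last by rewrite expnM.
rewrite (_ : 1 + 1 = 2)%N // => ->.
have hm : (m < (2 * m).+1)%N by rewrite ltnS mul2n -addnn leq_addl.
rewrite (bigD1 (Ordinal hm)) //= !exp1n !muln1; exact: leq_addr.

Qed.

Lemma cheb m : (0 < m)%N -> (m ^ cnt m (2 * m).+1 <= 4 ^ m)%N.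
Proof.
move=> m0; apply: leq_trans (PP_ge _ _) _; apply: leq_trans (binom_le m).
apply: dvdn_leq; first by rewrite bin_gt0 mul2n -addnn leq_addl.
by case: (@PP_prop m _ (leqnn _)).
Qed.

Lemma cheb2 j : (0 < j)%N -> (cnt (2^j) (2^j.+1).+1 * j <= 2 ^ j.+1)%N.
Proof.
move=> j0; have := @cheb (2^j) (expn_gt0 2 j).
rewrite -expnM (_ : 4 = 2^2)%N // -!expnM expnS leq_exp2l // mulnC.
by rewrite [(2 * 2^j)%N]mulnC.
Qed.
Local Open Scope ring_scope.

Lemma harm (R : realType) a b : (2 <= a <= b)%N ->
  \sum_(a <= j < b) (j%:R : R)^-1 <= ln ((b.-1)%:R) - ln ((a.-1)%:R).
Proof.
case/andP => ha hab.
rewrite -(telescope_sumr (fun k => ln ((k.-1)%:R : R)) hab) /=.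
rewrite !big_nat; apply: ler_sum => j /andP [hj _].
have j1 : (1 < j)%N by apply: leq_trans hj.
have jp : (0 : R) < j%:R by rewrite ltr0n; apply: leq_trans j1.
have jm : (0 : R) < (j.-1)%:R by rewrite ltr0n -ltnS prednK //; apply: ltnW.
have e : (j.-1)%:R = j%:R * (1 + (- (j%:R : R)^-1)).
  rewrite mulrDr mulr1 mulrN mulfV ?gt_eqF //. rewrite -{2}(prednK (ltnW j1)) -natr1 addrK //.
rewrite /= e lnM ?posrE //; last by rewrite subr_gt0 invf_lt1 // ltr1n.
have := @le_ln1Dx R (- (j%:R)^-1).
rewrite ltrN2 invf_lt1 // ltr1n => /(_ j1); lra.
Qed.


Lemma block (R : realType) j : (0 < j)%N ->
  \sum_((2^j).+1 <= p < (2 * 2^j).+1) (if prime p then (p%:R : R)^-1 else 0)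
  <= 2 / j%:R.
Proof.
move=> j0; set m := (2^j)%N.
have m0 : (0 < m)%N by apply: expn_gt0.
have h := @cheb2 j j0; rewrite expnS -/m in h.
have mR : (0 : R) < m%:R by rewrite ltr0n.
have jR : (0 : R) < j%:R by rewrite ltr0n.
apply: (@le_trans _ _ ((cnt m (2 * m).+1)%:R / m%:R)).
  rewrite /cnt natr_sum mulr_suml !big_nat; apply: ler_sum => p /andP [hp _].
  case: ifP => _; last by rewrite mul0r.
  rewrite mul1r lef_pV2 ?posrE ?ltr0n //; first by rewrite ler_nat ltnW.
  by apply: leq_ltn_trans hp.
rewrite ler_pdivrMr // mulrAC ler_pdivlMr //.
move: h; rewrite -(ler_nat R) !natrM => h; nra.
Qed.

Lemma dyadic (R : realType) (g : nat -> R) a b : (a <= b)%N ->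
  \sum_((2^a).+1 <= p < (2^b).+1) g p =
  \sum_(a <= j < b) \sum_((2^j).+1 <= p < (2 * 2^j).+1) g p.
Proof.
elim: b => [|b IH]; first by rewrite leqn0 => /eqP ->; rewrite !big_geq.
rewrite leq_eqVlt => /orP [/eqP ->|]; first by rewrite !big_geq.
rewrite ltnS => hab; rewrite [RHS]big_nat_recr //= -IH //.
rewrite -expnS; apply: big_cat_nat; first by rewrite ltnS leq_exp2l.
by rewrite ltnS leq_exp2l.
Qed.

Lemma Tbound (R : realType) (n a b : nat) (al : R) :
  (2^a)%:R <= al -> (n <= 2^b)%N -> (0 < a)%N -> (a <= b)%N ->
  \sum_(0 <= p < n.+1 | prime p && (al < p%:R)) (p%:R : R)^-1
  <= 2 * \sum_(a <= j < b) (j%:R : R)^-1.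
Proof.
move=> hal hn a0 hab.
pose G p : R := if prime p && (al < p%:R) then (p%:R)^-1 else 0.
rewrite (_ : \sum_(0 <= p < n.+1 | _) _ = \sum_(0 <= p < n.+1) G p);
  last by rewrite big_mkcond.
have G0 : forall p, 0 <= G p.
  by move=> p; rewrite /G; case: ifP => // _; rewrite invr_ge0 ler0n.
apply: (@le_trans _ _ (\sum_(0 <= p < (2^b).+1) G p)).
  rewrite (@big_cat_nat _ _ _ n.+1 0 (2^b).+1) //= lerDl.
  by apply: sumr_ge0 => i _.
have hab2 : (2^a <= 2^b)%N by rewrite leq_exp2l.
rewrite (@big_cat_nat _ _ _ (2^a).+1) //= big1_seq ?add0r; last first.
  move=> i /andP [_]; rewrite mem_index_iota ltnS => /andP [_ hi]; rewrite /G.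
  case: ifP => // /andP [_ hl]; exfalso.
  have : (i%:R : R) <= al by apply: le_trans hal; rewrite ler_nat.
  by rewrite leNgt hl.
apply: (@le_trans _ _ (\sum_((2^a).+1 <= p < (2^b).+1)
          (if prime p then (p%:R : R)^-1 else 0))).
  rewrite !big_nat; apply: ler_sum => i _; rewrite /G.
  case: ifP => [/andP [-> _] //| _]; case: ifP => // _.
rewrite dyadic // mulr_sumr !big_nat; apply: ler_sum => j /andP [hj _].
rewrite -[2 * _]/(2 / j%:R); apply: block; exact: leq_trans hj.
Qed.

Lemma term_ge0 (R : realType) (eps : nat -> nat -> R) n p :
  is_prob_perturbation eps -> (1 <= n)%N -> prime p -> (p <= n)%N ->
  0 <= (p%:R)^-1 + mult_sum eps n p.
Proof.
move=> hP n1 pp pn; have [hP1 _] := hP n n1.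
have p0 : (0 < p)%N by apply: prime_gt0.
have nR : (0 : R) < n%:R by rewrite ltr0n.
have pR : (0 : R) < p%:R by rewrite ltr0n.
apply: (@le_trans _ _ ((p%:R)^-1 - (n %/ p)%:R / n%:R)).
  rewrite subr_ge0 ler_pdivrMr // ler_pdivlMl // -natrM ler_nat mulnC.
  exact: leq_trunc_div.
rewrite lerD2l /mult_sum.
apply: (@le_trans _ _ (\sum_(1 <= l < (n %/ p).+1) (- (n%:R)^-1))).
  by rewrite sumr_const_nat subn1 /= mulNrn mulrC mulr_natr.
rewrite !big_nat; apply: ler_sum => l /andP [l1 l2].
rewrite -subr_ge0 opprK addrC; apply: hP1; rewrite muln_gt0 l1 p0 /=.
by apply: leq_trans (leq_trunc_div n p); rewrite leq_mul2r -ltnS l2 orbT.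
Qed.

Import numFieldNormedType.Exports.
Local Open Scope classical_set_scope.
Local Open Scope ring_scope.

Lemma ln_le (R : realType) (u v : R) : 0 < u -> u <= v -> ln u <= ln v.
Proof. move=> u0 uv; rewrite ler_ln ?posrE //; exact: lt_le_trans uv. Qed.

Lemma ar1 (R : realType) (y a : R) : 4 <= y -> y < a + 1 -> y <= 2 * (a - 1).
Proof. lra. Qed.

Lemma ar2 (R : realType) (u v w : R) : u <= w + v -> u - v <= w.
Proof. lra. Qed.

Lemma final (R : realType) (L K e T : R) : 0 < K -> 0 < e -> 2 <= T ->
  5 * K / e <= T -> T ^+ 4 < L ->
  (Num.sqrt L)^-1 * (K * ln (2 * L)) <= e.
Proof.
move=> K0 e0 T2 TK hL.
have T0 : 0 < T by apply: lt_le_trans T2.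
have L0 : 0 < L by apply: le_lt_trans hL; apply: exprn_ge0; apply: ltW.
set t : R := Num.sqrt (Num.sqrt L).
have ht2 : t ^+ 2 = Num.sqrt L by rewrite sqr_sqrtr // sqrtr_ge0.
have ht4 : t ^+ 4 = L by rewrite (_ : 4 = 2 * 2)%N // exprM ht2 sqr_sqrtr // ltW.
have t0 : 0 <= t by apply: sqrtr_ge0.
have Tt : T <= t.
  rewrite -(@ler_pXn2r _ 4) ?nnegrE //=; last exact: ltW.
  by move: (ltW hL); rewrite -{1}ht4.
have t2 : 2 <= t by apply: le_trans Tt.
have tp : 0 < t by apply: lt_le_trans t2.
have l2L : ln (2 * L) <= 5 * t.
  have h1 : 2 * L <= t ^+ 5.
    rewrite -ht4 (exprSr t 4) mulrC; apply: ler_wpM2l; [exact: exprn_ge0 | exact: t2].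
  have := @ln_le R _ _ (mulr_gt0 (ltr0n R 2) L0 : 0 < 2 * L) h1.
  rewrite lnXn // -mulr_natl => h2; apply: le_trans h2 _.
  rewrite -[ln t *+ 5]mulr_natl; apply: ler_wpM2l => //; exact: ltW (ln_sublinear tp).
rewrite -ht2.
apply: (@le_trans _ _ ((t ^+ 2)^-1 * (K * (5 * t)))).
  by rewrite ler_wpM2l ?invr_ge0 ?exprn_ge0 // ler_wpM2l // ltW.
have -> : (t ^+ 2)^-1 * (K * (5 * t)) = 5 * K / t.
  by rewrite expr2 invfM; field; rewrite gt_eqF.
apply: (@le_trans _ _ (5 * K / T)).
  apply: ler_wpM2l; first by rewrite mulr_ge0 // ltW.
  by rewrite (@lef_pV2 R) ?posrE.
by rewrite ler_pdivrMr // [e * T]mulrC -ler_pdivrMr.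
Qed.

Theorem lemma3 (R : realType) (eps : nat -> nat -> R) :
  is_prob_perturbation eps ->
  (exists C : R, forall n : nat, 0 < ln (ln (n%:R : R)) ->
     forall p : nat, prime p -> alpha R n < p%:R ->
       mult_sum eps n p <= C / p%:R) ->
  lemma3_seq eps @ \oo --> (0 : R).
Proof.
move=> hP [C hC].
set K : R := 2 * (1 + `|C|).
have K0 : 0 < K by rewrite /K; have := normr_ge0 C; lra.
apply/cvgrPdist_le => e e0.
set T : R := Num.max 2 (5 * K / e).
have T2 : 2 <= T by rewrite /T le_max lexx.
have TK : 5 * K / e <= T by rewrite /T le_max lexx orbT.
set N := (Num.Def.trunc (expR (expR (T ^+ 4)))).+1.
apply: filterS (nbhs_infty_ge N) => n /= hn.
have hnR : expR (expR (T ^+ 4)) < n%:R.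
  apply: lt_le_trans (_ : N%:R <= n%:R); last by rewrite ler_nat.
  by rewrite -truncn_lt_nat ?ltnSn // ltW // expR_gt0.
have nR : (0 : R) < n%:R by apply: lt_trans hnR; apply: expR_gt0.
have n1 : (1 <= n)%N by rewrite -(ltr_nat R).
set x := ln (n%:R : R).
have hx : expR (T ^+ 4) < x.
  by rewrite /x -[X in X < _]expRK ltr_ln ?posrE ?expR_gt0.
have x0 : 0 < x by apply: lt_trans hx; apply: expR_gt0.
set L := ln x.
have hL : T ^+ 4 < L by rewrite /L -[X in X < _]expRK ltr_ln ?posrE ?expR_gt0.
have T4 : 16 <= T ^+ 4.
  have T0 : 0 <= T by apply: le_trans T2.
  have : 2 ^+ 4 <= T ^+ 4 by rewrite lerXn2r // ?nnegrE.
  by rewrite (_ : 2 ^+ 4 = 16 :> R) //; rewrite !exprS expr0; lra.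
have L16 : 16 < L by apply: le_lt_trans hL.
have L0 : 0 < L by lra.
have hxL : 4 * L <= x.
  have h := @expR_ge1Dxn R L 1 (ltW L0).
  rewrite /L lnK ?posrE // -/L in h.
  move: h; rewrite (_ : ((1.+1)`!)%:R = 2 :> R) // => h; apply: le_trans h.
  have -> : L ^+ 2 / 2 = L * (L / 2) by rewrite expr2 mulrA.
  have : 8 <= L / 2 by rewrite ler_pdivlMr //; lra.
  rewrite -(ler_pM2l L0) => h8; lra.
have l2p : 0 < ln (2 : R) by apply: ln_gt0; lra.
have l2le : ln (2 : R) <= 1.
  by have := @le_ln1Dx R 1; rewrite (_ : 1 + 1 = 2 :> R) //; apply; lra.
set y := x / (L * ln 2).
have hy : y * (L * ln 2) = x by rewrite /y mulfVK // mulf_neq0 // gt_eqF.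
have y4 : 4 <= y.
  have : 4 * L <= y * L * ln 2 by rewrite -mulrA hy.
  have yy : 0 <= y by rewrite /y divr_ge0 // ?ltW // mulr_gt0.
  have h1 : y * L * ln 2 <= y * L by rewrite ler_piMr // mulr_ge0 // ltW.
  move=> h2; have : 4 * L <= y * L by lra.
  by rewrite ler_pM2r.
have y0 : 0 <= y by lra.
set z := x / ln 2.
have hz : z = L * y by rewrite /z -hy mulrA mulfK ?gt_eqF // mulrC.
have yz : y <= z by rewrite hz; nra.
set a := Num.Def.trunc y.
set b := (Num.Def.trunc z).+1.
have ha1 : a%:R <= y by rewrite truncn_le.
have ha2 : y < a%:R + 1 by rewrite natr1 -truncn_lt_nat.
have hb1 : (b.-1)%:R <= z by rewrite /b /= truncn_le; lra.
have hb2 : z < b%:R by rewrite -truncn_lt_nat //; lra.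
have a2 : (2 <= a)%N by rewrite -(ler_nat R); lra.
have ab : (a <= b)%N by apply: leqW; apply: le_truncn.
have hal : alpha R n = expR (x / L).
  by rewrite /alpha /powR gt_eqF // mulrC.
have h2a : (2 ^ a)%:R <= alpha R n.
  rewrite hal natrX -{1}(lnK (_ : (2 : R) \in Num.pos)) ?posrE //.
  rewrite -expRM_natl ler_expR.
  have -> : x / L = y * ln 2 by rewrite -hy [L * _]mulrC mulrA mulfK ?gt_eqF.
  by rewrite ler_pM2r.
have hnb : (n <= 2 ^ b)%N.
  rewrite -(ler_nat R) natrX -{1}(lnK (_ : (n%:R : R) \in Num.pos)) ?posrE //.
  rewrite -{1}(lnK (_ : (2 : R) \in Num.pos)) ?posrE //.
  rewrite -expRM_natl ler_expR -/x.
  have -> : x = z * ln 2 by rewrite /z mulfVK // gt_eqF.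
  by rewrite ler_pM2r // ltW.
have a1 : (0 < a)%N by apply: leq_trans a2.
have hT := @Tbound R n a b (alpha R n) h2a hnb a1 ab.
have hH := @harm R a b ltac:(by rewrite a2 ab).
have ha3 : (a.-1)%:R = a%:R - 1 :> R by rewrite -subn1 natrB // ltnW.
have a2R : (2 : R) <= a%:R by rewrite ler_nat.
have am : (0 : R) < (a.-1)%:R by rewrite ltr0n -subn1 subn_gt0.
have ya : y <= 2 * (a.-1)%:R by rewrite ha3; apply: ar1.
have hbm : (b.-1)%:R <= (2 * L) * (a.-1)%:R.
  by apply: le_trans hb1 _; rewrite hz [2 * L]mulrC -mulrA ler_pM2l.
have bpos : (0 : R) < (b.-1)%:R.
  rewrite ltr0n /b /=; apply: leq_trans a1 _; exact: le_truncn.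
have lnb : ln ((b.-1)%:R : R) - ln ((a.-1)%:R) <= ln (2 * L).
  have := @ln_le R _ _ bpos hbm; rewrite lnM ?posrE ?mulr_gt0 //; apply: ar2.
rewrite sub0r normrN.
have -> : lemma3_seq eps n = (Num.sqrt L)^-1 *
   \sum_(0 <= p < n.+1 | prime p && (alpha R n < p%:R))
     ((p%:R)^-1 + mult_sum eps n p) by [].
set S := \sum_(_ <= _ < _ | _) _.
have S0 : 0 <= S.
  rewrite /S big_nat_cond; apply: sumr_ge0 => p /andP [/andP [_ hp] /andP [pp _]].
  by apply: term_ge0 => //; rewrite -ltnS.
have C0 : 0 <= 1 + `|C| by rewrite addr_ge0.
have S1 : S <= K * ln (2 * L).
  apply: (@le_trans _ _ ((1 + `|C|) *
     \sum_(0 <= p < n.+1 | prime p && (alpha R n < p%:R)) (p%:R : R)^-1)).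
    rewrite /S mulr_sumr; apply: ler_sum => p /andP [pp hp].
    have h1 := hC n L0 p pp hp.
    have h2 : C / p%:R <= `|C| / p%:R.
      by apply: ler_wpM2r; [rewrite invr_ge0 ler0n | exact: ler_norm].
    rewrite mulrDl mul1r lerD2l; exact: le_trans h1 h2.
  rewrite /K mulrAC mulrC; apply: ler_wpM2r => //.
  apply: (le_trans hT); apply: ler_wpM2l => //.
  exact: (le_trans hH lnb).
rewrite ger0_norm ?mulr_ge0 ?invr_ge0 ?sqrtr_ge0 //.
have hf := @final R L K e T K0 e0 T2 TK hL.
apply: (le_trans _ hf).
by rewrite ler_wpM2l ?invr_ge0 ?sqrtr_ge0.
Qed.
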